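(* Let $G$ be a finite nilpotent group. If $H$ is a finite group with $C(G)\cong C(H)$ and $|G|=|H|$, then $H$ is nilpotent.
   Context: All groups are finite. For a group $X$, let $\mathrm{Cyc}(X)=\{x\in X : \langle x,y\rangle \text{ is cyclic for all } y\in X\}$. The cyclic graph $C(X)$ is the simple graph with vertex set $X\setminus \mathrm{Cyc}(X)$ in which two distinct vertices $x,y$ are adjacent iff $\langle x,y\rangle$ is cyclic. *)

(* Defs.v *)
From mathcomp Require Import all_boot all_fingroup all_solvable.
Set Implicit Arguments. Unset Strict Implicit. Unset Printing Implicit Defensive.
Local Open Scope group_scope.

Definition Cyc (gT : finGroupType) (X : {set gT}) : {set gT} :=
  [set x in X | [forall y in X, cyclic <<[set x; y]>>]].

Definition cyc_vertices (gT : finGroupType) (X : {set gT}) : {set gT} :=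
  X :\: Cyc X.

Definition cyc_adj (gT : finGroupType) (x y : gT) : bool :=
  (x != y) && cyclic <<[set x; y]>>.

Definition cyclic_graph_iso (gT hT : finGroupType) (G : {set gT}) (H : {set hT}) : Prop :=
  exists f : gT -> hT,
    [/\ {in cyc_vertices G &, injective f},
        f @: cyc_vertices G = cyc_vertices H &
        {in cyc_vertices G &, forall x y, cyc_adj x y = cyc_adj (f x) (f y)}].

(* Main.v *)
Require Import Defs.
From mathcomp Require Import all_boot all_fingroup all_solvable.
Set Implicit Arguments. Unset Strict Implicit. Unset Printing Implicit Defensive.
Local Open Scope group_scope.

Lemma card_split (A : finType) (S B : {set A}) (P : pred A) :
  #|[set y in S | P y]| = #|[set y in S :&: B | P y]| + #|[set y in S :\: B | P y]|.
Proof.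
rewrite -(cardsID B [set y in S | P y]); congr (addn _ _); apply: eq_card => y;
 rewrite !inE; by case: (y \in S); case: (y \in B); case: (P y).
Qed.

Lemma partition_count (A : finType) (T : A -> {set A}) (P Q : pred A) :
  (forall w y, y \in T w -> T y = T w) ->
  forall S : {set A}, (forall z, z \in S -> z \in T z) ->
  (forall z, z \in S -> T z \subset S) ->
  (forall z, z \in S -> #|[set y in T z | P y]| = #|[set y in T z | Q y]|) ->
  #|[set y in S | P y]| = #|[set y in S | Q y]|.
Proof.
move=> Teq S; move: {2}#|S| (leqnn #|S|) => n.
elim: n S => [|n IH] S leS h1 h2 h3.
  have S0: S = set0 by apply/eqP; rewrite -cards_eq0 -leqn0.
  by rewrite S0; apply: eq_card => y; rewrite !inE.
case: (set_0Vmem S) => [->|[z zS]]; first by apply: eq_card => y; rewrite !inE.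
have sTS := h2 z zS.
rewrite (card_split S (T z) P) (card_split S (T z) Q).
have ->: S :&: T z = T z by apply/setIidPr.
rewrite h3 //; congr (addn _ _).
apply: IH.
- rewrite -ltnS (leq_trans _ leS) //; apply: proper_card; apply/properP; split.
    exact: subsetDl.
  by exists z; rewrite // !inE h1 // zS.
- by move=> z'; rewrite inE => /andP[_ /h1].
- move=> z'; rewrite inE => /andP[z'T z'S]; apply/subsetP=> y yT.
  rewrite inE (subsetP (h2 _ z'S)) // andbT.
  apply: contra z'T => yTz; rewrite -(Teq _ _ yTz) (Teq _ _ yT); exact: h1.
- by move=> z'; rewrite inE => /andP[_ /h3].
Qed.

Lemma in_sep (A : finType) (S : {set A}) (a : pred A) y :
  (y \in [set z in S | a z]) = (y \in S) && a y.
Proof. by rewrite inE. Qed.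

Lemma cnt_conv (A : finType) (S : {set A}) (a P : pred A) :
  #|[set y in [set z in S | a z] | P y]| = #|[set y in S | a y && P y]|.
Proof. by apply: eq_card => y; rewrite !inE andbA. Qed.

Section Gen.
Variables (gT : finGroupType) (X : {group gT}).

Definition nbr (x : gT) := [set y in X | cyclic <<[set x; y]>>].
Definition Icl (x : gT) := [set y in X | nbr x \subset nbr y].

Lemma gen2_sub a b (K : {group gT}) :
  (<<[set a; b]>> \subset K) = (a \in K) && (b \in K).
Proof. by rewrite gen_subG subUset !sub1set. Qed.

Definition maxcyc (m : gT) :=
  forall C : {group gT}, cyclic C -> C \subset X -> <[m]> \subset C -> C :=: <[m]>.

Lemma max_cyc_exists g : g \in X ->
  exists2 m, m \in X & (g \in <[m]>) /\ maxcyc m.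
Proof.
move=> gX.
pose gP := fun C : {group gT} => cyclic C && (C \subset X).
have gPg : gP <[g]>%G by rewrite /gP /= cycle_cyclic cycle_subG.
have [M /maxgroupP[/andP[cM sMX] maxM] sgM] := @maxgroup_exists _ gP _ gPg.
have [m defM] := cyclicP cM.
exists m; first by apply: (subsetP sMX); rewrite defM cycle_id.
split; first by rewrite -defM; apply: (subsetP sgM); exact: cycle_id.
move=> C cC sCX sMC; rewrite -defM; apply: maxM; first by rewrite /gP cC sCX.
by move: sMC; rewrite -defM.
Qed.

Lemma in_maxcyc m y : m \in X -> maxcyc m -> y \in X ->
  cyclic <<[set y; m]>> -> y \in <[m]>.
Proof.
move=> mX mm yX cyc.
have e : <<[set y; m]>> :=: <[m]>.
  apply: (mm <<[set y; m]>>%G) => //=; first by rewrite gen2_sub yX.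
  by rewrite cycle_subG mem_gen // !inE eqxx orbT.
by rewrite -e mem_gen // !inE eqxx.
Qed.

Lemma cyc_sub_cycle a b m : a \in <[m]> -> b \in <[m]> -> cyclic (<<[set a; b]>> : {set gT}).
Proof.
by move=> am bm; apply: (cyclicS _ (cycle_cyclic m)); rewrite gen2_sub am.
Qed.

Lemma nbr_max x m : m \in X -> x \in <[m]> -> m \in nbr x.
Proof. by move=> mX xm; rewrite inE mX (cyc_sub_cycle xm (cycle_id m)). Qed.

Lemma Icl_sub_max x y m : m \in X -> maxcyc m -> x \in <[m]> ->
  y \in Icl x -> y \in <[m]>.
Proof.
move=> mX mm xm; rewrite inE => /andP[yX /subsetP sN].
have := sN _ (nbr_max mX xm); rewrite inE => /andP[_ cyc].
exact: in_maxcyc.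
Qed.

Lemma Icl_group_set x : x \in X -> group_set (Icl x).
Proof.
move=> xX; apply/group_setP; split.
  rewrite inE group1; apply/subsetP=> y; rewrite !inE => /andP[yX _].
  by rewrite yX (cyc_sub_cycle (group1 _) (cycle_id y)).
move=> y z yI zI.
have yX : y \in X by move: yI; rewrite inE => /andP[].
have zX : z \in X by move: zI; rewrite inE => /andP[].
rewrite inE groupM //; apply/subsetP=> w; rewrite inE => /andP[wX cxw].
have [g defg] := cyclicP cxw.
have gX : g \in X by rewrite -cycle_subG -defg gen2_sub xX.
have [m mX [gm mm]] := max_cyc_exists gX.
have sgm : <[g]> \subset <[m]> by rewrite cycle_subG.
have xm : x \in <[m]>.
  by apply: (subsetP sgm); rewrite -defg mem_gen // !inE eqxx.
have wm : w \in <[m]>.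
  by apply: (subsetP sgm); rewrite -defg mem_gen // !inE eqxx orbT.
rewrite inE wX; apply: cyc_sub_cycle wm.
by rewrite groupM // (Icl_sub_max mX mm xm).
Qed.

Lemma Icl_cyclic x : x \in X -> cyclic (Icl x).
Proof.
move=> xX; have [m mX [xm mm]] := max_cyc_exists xX.
pose K := Group (Icl_group_set xX); change (cyclic K).
apply: (cyclicS _ (cycle_cyclic m)); apply/subsetP=> y yK; exact: (Icl_sub_max mX mm xm yK).
Qed.

Lemma card_pelt (K : {group gT}) p : nilpotent K ->
  #|[set y in K | p.-elt y]| = (#|K|`_p)%N.
Proof.
move=> nK; have hall := nilpotent_pcore_Hall p nK.
rewrite -(card_Hall hall); apply: eq_card => y; rewrite inE.
case yK: (y \in K); first by rewrite (mem_normal_Hall hall (pcore_normal _ _) yK).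
by apply/esym/negbTE; apply: contraFN yK; apply: (subsetP (pcore_sub _ _)).
Qed.

Lemma pelt_Icl x p : x \in X -> #|[set y in Icl x | p.-elt y]| = (#|Icl x|`_p)%N.
Proof.
move=> xX; pose K := Group (Icl_group_set xX).
have nK : nilpotent K by apply: abelian_nil; apply: cyclic_abelian; exact: Icl_cyclic.
exact: (card_pelt p nK).
Qed.

Lemma Cyc_Icl1 : Cyc X = Icl 1.
Proof.
apply/setP=> y; rewrite !inE; case yX: (y \in X) => //=.
apply/forallP/subsetP => [h z | h z].
  rewrite !inE => /andP[zX _]; rewrite zX /=.
  by have := h z; rewrite zX.
apply/implyP=> zX; have : z \in nbr 1.
  by rewrite inE zX (cyc_sub_cycle (group1 _) (cycle_id z)).
by move/h; rewrite inE => /andP[].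
Qed.

Definition V := cyc_vertices X.
Definition adjc (x z : gT) := (z == x) || cyc_adj x z.
Definition Rle (x y : gT) := [forall z in V, adjc x z ==> adjc y z].

Lemma V_X z : z \in V -> z \in X.
Proof. by rewrite inE => /andP[]. Qed.

Lemma Cyc_X : Cyc X \subset X.
Proof. by apply/subsetP=> z; rewrite inE => /andP[]. Qed.

Lemma nbr_V w z : w \in X -> z \in V -> (z \in nbr w) = adjc w z.
Proof.
move=> wX zV; rewrite inE (V_X zV) /= /adjc /cyc_adj.
case: eqP => [->|/eqP nzw] /=.
  by rewrite (cyc_sub_cycle (cycle_id w) (cycle_id w)).
by rewrite eq_sym nzw.
Qed.

Lemma nbr_Cyc w z : w \in X -> z \in Cyc X -> z \in nbr w.
Proof.
move=> wX; rewrite inE => /andP[zX /forallP h]; rewrite inE zX /=.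
by have := h w; rewrite wX /= setUC.
Qed.

Lemma sub_nbrE x y : x \in X -> y \in X -> (nbr x \subset nbr y) = Rle x y.
Proof.
move=> xX yX; apply/subsetP/forallP => [h z | h z].
  by apply/implyP=> zV; apply/implyP; rewrite -!nbr_V //; apply: h.
move=> zN; have zX : z \in X by move: zN; rewrite inE => /andP[].
case zC: (z \in Cyc X); first exact: nbr_Cyc.
have zV : z \in V by rewrite inE zC zX.
by have := implyP (implyP (h z) zV); rewrite -!nbr_V //; apply.
Qed.

Lemma Rle_refl x : Rle x x.
Proof. by apply/forallP=> z; rewrite implybb implybT. Qed.

Lemma Rle_trans x y z : Rle x y -> Rle y z -> Rle x z.
Proof.
move=> /forallP h1 /forallP h2; apply/forallP=> w; apply/implyP=> wV.
apply/implyP=> a; apply: (implyP (implyP (h2 w) wV)); exact: (implyP (implyP (h1 w) wV)).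
Qed.

Lemma nbr_of_Cyc y z : y \in Cyc X -> z \in X -> z \in nbr y.
Proof.
by rewrite inE => /andP[yX /forallP h] zX; rewrite inE zX /=; have := h z; rewrite zX.
Qed.

Lemma Icl_split x : x \in X -> Icl x = Cyc X :|: [set y in V | Rle x y].
Proof.
move=> xX; apply/setP=> y; rewrite in_setU.
case yC: (y \in Cyc X) => /=.
  have yX : y \in X := subsetP Cyc_X _ yC.
  rewrite inE yX /=; apply/subsetP=> z zN.
  have zX : z \in X by move: zN; rewrite inE => /andP[].
  exact: nbr_of_Cyc.
rewrite [y \in Icl x]inE [y \in [set y in V | _]]inE.
case yX: (y \in X) => /=.
  by rewrite /V /cyc_vertices in_setD yC yX sub_nbrE.
by rewrite /V /cyc_vertices in_setD yX andbF.
Qed.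

Lemma card_Icl x : x \in X -> #|Icl x| = (#|Cyc X| + #|[set y in V | Rle x y]|)%N.
Proof.
move=> xX; rewrite Icl_split // cardsU.
suff -> : Cyc X :&: [set y in V | Rle x y] = set0 by rewrite cards0 subn0.
apply/setP=> y; rewrite !inE; by case: (y \in X); case: [forall y0 in X, _].
Qed.

Lemma IclD x : x \in X -> Icl x :\: Cyc X = [set y in V | Rle x y].
Proof.
move=> xX; rewrite Icl_split //; apply/setP=> y; rewrite in_setD in_setU.
case yC: (y \in Cyc X) => //=.
by rewrite inE /V /cyc_vertices in_setD yC.
Qed.

Lemma decomp x (p : nat) : x \in X ->
  (#|Icl x|`_p = #|Cyc X|`_p
     + #|[set y in V | (Rle x y && Rle y x) && p.-elt y]|
     + #|[set y in V | (Rle x y && ~~ Rle y x) && p.-elt y]|)%N.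
Proof.
move=> xX; rewrite -pelt_Icl // Cyc_Icl1 -pelt_Icl ?group1 // -Cyc_Icl1.
rewrite (card_split (Icl x) (Cyc X)).
have -> : Icl x :&: Cyc X = Cyc X.
  by apply/setIidPr; rewrite Icl_split // subsetUl.
rewrite -addnA IclD //; congr (addn _ _).
rewrite (card_split [set y0 in V | Rle x y0] [set y | Rle y x]); congr (addn _ _); apply: eq_card => y;
  rewrite !inE; by case: (y \in X); case: [forall y0 in X, _]; case: (Rle x y); case: (Rle y x); case: (p.-elt y).
Qed.

Lemma card_Cyc_V : (#|X| = #|Cyc X| + #|V|)%N.
Proof.
by rewrite /V /cyc_vertices -(cardsID (Cyc X) X) (setIidPr Cyc_X).
Qed.

Lemma total_count (p : nat) : (#|[set y in X | p.-elt y]| = #|Cyc X|`_p + #|[set y in V | p.-elt y]|)%N.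
Proof.
rewrite (card_split X (Cyc X)) (setIidPr Cyc_X) Cyc_Icl1 pelt_Icl ?group1 //.
by rewrite -Cyc_Icl1.
Qed.

End Gen.

Section Two.
Variables (gT hT : finGroupType) (G : {group gT}) (H : {group hT}) (f : gT -> hT).
Hypotheses (finj : {in V G &, injective f}) (fimg : f @: V G = V H)
  (fadj : {in V G &, forall x y, cyc_adj x y = cyc_adj (f x) (f y)})
  (oGH : #|G| = #|H|).

Lemma fV x : x \in V G -> f x \in V H.
Proof. by move=> xV; rewrite -fimg imset_f. Qed.

Lemma VH_inv y' : y' \in V H -> exists2 y, y \in V G & y' = f y.
Proof. by rewrite -fimg => /imsetP. Qed.

Lemma adjc_f x z : x \in V G -> z \in V G -> adjc (f x) (f z) = adjc x z.
Proof.
move=> xV zV; rewrite /adjc -fadj //; congr (_ || _).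
by apply/eqP/eqP => [/(finj zV xV)|->].
Qed.

Lemma Rle_f x y : x \in V G -> y \in V G -> Rle H (f x) (f y) = Rle G x y.
Proof.
move=> xV yV; apply/forallP/forallP => h z.
  apply/implyP=> zV; move: (implyP (h (f z)) (fV zV)); rewrite !adjc_f //.
apply/implyP=> z'V; have [z0 zV ->] := VH_inv z'V.
by rewrite !adjc_f //; exact: (implyP (h z0) zV).
Qed.

Lemma transfer (P' : pred hT) (Pg : pred gT) :
  {in V G, forall y, P' (f y) = Pg y} ->
  #|[set y' in V H | P' y']| = #|[set y in V G | Pg y]|.
Proof.
move=> e.
have -> : [set y' in V H | P' y'] = f @: [set y in V G | Pg y].
  apply/setP=> y'; rewrite in_sep; apply/andP/imsetP => [[y'V Py']|[y yS ->]].
    have [y yV ey] := VH_inv y'V.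
    by exists y => //; rewrite in_sep yV -e // -ey.
  by move: yS; rewrite in_sep => /andP[yV Py]; rewrite fV // e.
rewrite card_in_imset //.
move=> a b; rewrite !in_sep => /andP[aV _] /andP[bV _]; exact: finj.
Qed.

Lemma card_VGH : #|V H| = #|V G|.
Proof. by rewrite -fimg card_in_imset. Qed.

Lemma card_Cyc : #|Cyc H| = #|Cyc G|.
Proof.
by apply/eqP; rewrite -(eqn_add2r #|V H|) -card_Cyc_V card_VGH -card_Cyc_V oGH.
Qed.

Definition TG z := [set y in V G | Rle G z y && Rle G y z].

Lemma TG_eq w y : y \in TG w -> TG y = TG w.
Proof.
rewrite in_sep => /andP[yV /andP[wy yw]]; apply/setP=> u; rewrite !in_sep.
case: (u \in V G) => //=; apply/idP/idP => /andP[a b].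
  by rewrite (Rle_trans wy a) (Rle_trans b yw).
by rewrite (Rle_trans yw a) (Rle_trans b wy).
Qed.

Lemma twin_eq (p : nat) n x : #|[set y in V G | Rle G x y]| <= n -> x \in V G ->
  #|[set y in V G | (Rle G x y && Rle G y x) && p.-elt y]|
  = #|[set y in V G | (Rle G x y && Rle G y x) && p.-elt (f y)]|.
Proof.
elim: n x => [|n IH] x le xV.
  move: le; rewrite leqn0 cards_eq0 => /eqP e.
  have : x \in [set y in V G | Rle G x y] by rewrite in_sep xV Rle_refl.
  by rewrite e in_set0.
have xX := V_X xV; have fxX := V_X (fV xV).
have dG := decomp p xX; have dH := decomp p fxX.
have eI : #|Icl G x| = #|Icl H (f x)|.
  rewrite !card_Icl // card_Cyc; congr addn; apply/esym/transfer => y yV.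
  exact: Rle_f.
rewrite eI dH card_Cyc in dG.
rewrite (@transfer _ (fun y => (Rle G x y && Rle G y x) && p.-elt (f y))) in dG;
  last by move=> y yV /=; rewrite !Rle_f.
rewrite (@transfer _ (fun y => (Rle G x y && ~~ Rle G y x) && p.-elt (f y))) in dG;
  last by move=> y yV /=; rewrite !Rle_f.
pose S := [set y in V G | Rle G x y && ~~ Rle G y x].
have eB : #|[set y in S | p.-elt y]| = #|[set y in S | p.-elt (f y)]|.
  apply: (@partition_count _ TG) => [|z|z|z]; first exact: TG_eq.
  - by rewrite !in_sep => /andP[zV _]; rewrite zV !Rle_refl.
  - rewrite in_sep => /andP[zV /andP[xz zx]]; apply/subsetP=> y.
    rewrite !in_sep => /andP[yV /andP[zy yz]]; rewrite yV (Rle_trans xz zy) /=.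
    by apply: contra zx => yx; apply: Rle_trans yx.
  - rewrite in_sep => /andP[zV /andP[xz zx]]; rewrite /TG !cnt_conv.
    apply: IH zV; rewrite -ltnS (leq_trans _ le) //; apply: proper_card.
    apply/properP; split.
      apply/subsetP=> y; rewrite !in_sep => /andP[yV zy].
      by rewrite yV (Rle_trans xz zy).
    by exists x; rewrite !in_sep xV ?Rle_refl //=.
rewrite /S !cnt_conv in eB.
rewrite eB in dG; move/eqP: dG; rewrite -!addnA eqn_add2l eqn_add2r => /eqP.
by move=> ->.
Qed.

Lemma pelt_count (p : nat) :
  #|[set y in V G | p.-elt y]| = #|[set y in V G | p.-elt (f y)]|.
Proof.
apply: (@partition_count _ TG) => [|z|z|z]; first exact: TG_eq.
- by rewrite in_sep => zV; rewrite zV !Rle_refl.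
- by move=> _; apply/subsetP=> y; rewrite in_sep => /andP[].
- move=> zV; rewrite /TG !cnt_conv; exact: (twin_eq p (leqnn _) zV).
Qed.

Lemma H_count (p : nat) : nilpotent G -> #|[set y in H | p.-elt y]| = (#|H|`_p)%N.
Proof.
move=> nG; rewrite total_count -oGH -(card_pelt p nG) total_count card_Cyc.
congr addn; rewrite (@transfer _ (fun y => p.-elt (f y))) //.
by rewrite pelt_count.
Qed.

End Two.

Lemma nil_of_count (hT : finGroupType) (H : {group hT}) :
  (forall p : nat, #|[set y in H | p.-elt y]| = (#|H|`_p)%N) -> nilpotent H.
Proof.
move=> cnt; apply: (nilpotentS _ (Fitting_nil H)).
rewrite -{1}(Sylow_gen H) gen_subG; apply/bigcupsP => P /SylowP[p pr sylP].
have eqE : forall Q : {group hT}, p.-Sylow(H) Q -> Q :=: [set y in H | p.-elt y].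
  move=> Q sylQ; apply/eqP; rewrite eqEcard; apply/andP; split.
    apply/subsetP=> y yQ; rewrite in_sep (subsetP (pHall_sub sylQ)) //=.
    exact: mem_p_elt (pHall_pgroup sylQ) yQ.
  by rewrite cnt (card_Hall sylQ).
apply: Fitting_max (pgroup_nil (pHall_pgroup sylP)).
apply/normalP; split; first exact: pHall_sub sylP.
move=> h hH; have sylPh : p.-Sylow(H) (P :^ h)%G by rewrite pHallJ.
by rewrite (eqE _ sylPh) (eqE _ sylP).
Qed.

Theorem corollary4 (gT hT : finGroupType) (G : {group gT}) (H : {group hT}) :
  nilpotent G -> cyclic_graph_iso G H -> #|G| = #|H| -> nilpotent H.
Proof.
move=> nG [f [finj fimg fadj]] oGH; apply: nil_of_count => p.
exact: (H_count finj fimg fadj oGH p nG).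
Qed.
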